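(* (1) There exists a sequent that is not cut-free provable in $\mathtt{GTPDL}$ but is cut-free provable in $\mathtt{CGTPDL}$; moreover, there exists a sequent that is not Fischer–Ladner-cut provable in $\mathtt{GTPDL}$ but is cut-free provable in $\mathtt{CGTPDL}$. (2) There exists a sequent that is provable in both $\mathtt{GTPDL}$ and $\mathtt{CGTPDL}$, but is cut-free provable in neither.
   Context: $\mathtt{TPDL}$ formulas/programs over sets $\mathsf{Prop}$, $\mathsf{AtProg}$: $\varphi ::= \bot \mid p \mid (\varphi\to\varphi) \mid [\pi]\varphi \mid [\pi]^{\leftarrow}\varphi$, $\pi ::= \alpha \mid \pi;\pi \mid \pi\cup\pi \mid \pi^{*} \mid \varphi?$. $[\pi]\Gamma=\{[\pi]\varphi:\varphi\in\Gamma\}$, similarly $[\pi]^{\leftarrow}\Gamma$. A sequent is a pair $\Gamma\Rightarrow\Delta$ of finite sets of formulas. Common rules (premises / conclusion): (Ax) / $\Gamma\Rightarrow\Delta$, $\Gamma\cap\Delta\neq\emptyset$; ($\bot$) / $\Gamma,\bot\Rightarrow\Delta$; ($\to$L) $\Gamma\Rightarrow\varphi,\Delta$ and $\Gamma,\psi\Rightarrow\Delta$ / $\Gamma,\varphi\to\psi\Rightarrow\Delta$; ($\to$R) $\Gamma,\varphi\Rightarrow\psi,\Delta$ / $\Gamma\Rightarrow\varphi\to\psi,\Delta$; (Wk) $\Gamma\Rightarrow\Delta$ / $\Gamma'\Rightarrow\Delta'$, $\Gamma\subseteq\Gamma'$, $\Delta\subseteq\Delta'$; (Cut) $\Gamma\Rightarrow\varphi,\Delta$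 and $\Gamma,\varphi\Rightarrow\Delta$ / $\Gamma\Rightarrow\Delta$ ($\varphi$ is the cut formula); ($[\,]$) $\Gamma\Rightarrow\varphi,[\pi]^{\leftarrow}\Delta$ / $[\pi]\Gamma\Rightarrow[\pi]\varphi,\Delta$; ($[\,]^{\leftarrow}$) $\Gamma\Rightarrow\varphi,[\pi]\Delta$ / $[\pi]^{\leftarrow}\Gamma\Rightarrow[\pi]^{\leftarrow}\varphi,\Delta$; ($[;]$L) $\Gamma,[\pi_0][\pi_1]\varphi\Rightarrow\Delta$ / $\Gamma,[\pi_0;\pi_1]\varphi\Rightarrow\Delta$; ($[;]$R) $\Gamma\Rightarrow[\pi_0][\pi_1]\varphi,\Delta$ / $\Gamma\Rightarrow[\pi_0;\pi_1]\varphi,\Delta$; ($[\cup]$L) $\Gamma,[\pi_0]\varphi,[\pi_1]\varphi\Rightarrow\Delta$ / $\Gamma,[\pi_0\cup\pi_1]\varphi\Rightarrow\Delta$; ($[\cup]$R) $\Gamma\Rightarrow\Delta,[\pi_0]\varphi$ and $\Gamma\Rightarrow\Delta,[\pi_1]\varphi$ / $\Gamma\Rightarrow[\pi_0\cup\pi_1]\varphi,\Delta$; ($[*]$L) $\Gamma,\varphi,[\pi][\pi^*]\varphi\Rightarrow\Delta$ / $\Gamma,[\pi^*]\varphi\Rightarrow\Delta$; ($[?]$L) $\Gamma\Rightarrow\varphi,\Delta$ and $\Gamma,\psi\Rightarrow\Delta$ / $\Gamma,[\varphi?]\psi\Rightarrow\Delta$; ($[?]$R) $\Gamma,\varphi\Rightarrow\psi,\Delta$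 / $\Gamma\Rightarrow[\varphi?]\psi,\Delta$. $\mathtt{GTPDL}$ adds ($[*]$R) $\Gamma,\varphi\Rightarrow[\pi]\varphi$ / $[\pi^*]\Gamma,\varphi\Rightarrow[\pi^*]\varphi$; its proofs are finite trees of rule instances with all leaves Ax/$\bot$. $\mathtt{CGTPDL}$ instead adds (C-s) $\Gamma\Rightarrow\varphi,\Delta$ and $\Gamma\Rightarrow[\pi][\pi^*]\varphi,\Delta$ / $\Gamma\Rightarrow[\pi^*]\varphi,\Delta$; its proofs are finite trees of rule instances whose leaves are Ax/$\bot$ instances or buds, each bud assigned a companion (an inner node with the same sequent), such that in the graph identifying buds with companions every infinite path has a tail followed by a trace with infinitely many progress points. Here a trace along a path $(\Gamma_i\Rightarrow\Delta_i)$ is a sequence $\tau_i\in\Delta_i$ which at ($\to$R), ($[;]$R), ($[\cup]$R), ($[?]$R), (C-s) either stays the same or passes from the principal formula to its component in the chosen premise ($\psi$ for $\varphi\to\psi$; $[\pi_0][\pi_1]\varphi$; $[\pi_j]\varphi$; $\psi$ for $[\varphi?]\psi$; $\varphi$ or $[\pi][\pi^*]\varphi$ for $[\pi^*]\varphi$, the latter a progress point), at ($[\,]$)/($[\,]^{\leftarrow}$) passes from the principal $[\pi]\varphi$/$[\pi]^{\leftarrow}\varphi$ to $\varphi$, and otherwise stays the same. A proof is cut-free if it contains no instance of Cut. The Fischer–Ladner closure $\mathrm{FL}(\Lambda)$ of a set of formulas: $\mathrm{FL}(\bot)=\{\bot\}$, $\mathrm{FL}(p)=\{p\}$, $\mathrm{FL}(\psi_0\to\psi_1)=\{\psi_0\to\psi_1\}\cup\mathrm{FL}(\psi_0)\cup\mathrm{FL}(\psi_1)$,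 $\mathrm{FL}([\pi]\psi)=\mathrm{FL}_\Box([\pi]\psi)\cup\mathrm{FL}(\psi)$, $\mathrm{FL}([\pi]^{\leftarrow}\psi)=\mathrm{FL}_\Box([\pi]^{\leftarrow}\psi)\cup\mathrm{FL}(\psi)$, where $\mathrm{FL}_\Box([\alpha]\psi)=\{[\alpha]\psi\}$, $\mathrm{FL}_\Box([\pi_0;\pi_1]\psi)=\{[\pi_0;\pi_1]\psi\}\cup\mathrm{FL}_\Box([\pi_0][\pi_1]\psi)\cup\mathrm{FL}_\Box([\pi_1]\psi)$, $\mathrm{FL}_\Box([\pi_0\cup\pi_1]\psi)=\{[\pi_0\cup\pi_1]\psi\}\cup\mathrm{FL}_\Box([\pi_0]\psi)\cup\mathrm{FL}_\Box([\pi_1]\psi)$, $\mathrm{FL}_\Box([\pi^*]\psi)=\{[\pi^*]\psi\}\cup\mathrm{FL}_\Box([\pi][\pi^*]\psi)$, $\mathrm{FL}_\Box([\psi_0?]\psi_1)=\{[\psi_0?]\psi_1\}\cup\mathrm{FL}(\psi_0)$, and the backwards versions analogously except $\mathrm{FL}_\Box([\pi_0;\pi_1]^{\leftarrow}\psi)=\{[\pi_0;\pi_1]^{\leftarrow}\psi\}\cup\mathrm{FL}_\Box([\pi_1]^{\leftarrow}[\pi_0]^{\leftarrow}\psi)\cup\mathrm{FL}_\Box([\pi_0]^{\leftarrow}\psi)$; $\mathrm{FL}(\Lambda)=\bigcup_{\varphi\in\Lambda}\mathrm{FL}(\varphi)$. A Cut instance with conclusion $\Gamma\Rightarrow\Delta$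 is a Fischer–Ladner-cut if its cut formula lies in $\mathrm{FL}(\Gamma\cup\Delta)$; a sequent is Fischer–Ladner-cut provable in a system if it has a proof there in which every Cut instance is a Fischer–Ladner-cut. *)

(* Defs.v *)
From Stdlib Require Import List Arith.
Import ListNotations.

Inductive formula : Type :=
| FBot : formula
| FVar : nat -> formula
| FImp : formula -> formula -> formula
| FBox : program -> formula -> formula
| FBBox : program -> formula -> formula
with program : Type :=
| PAtom : nat -> program
| PSeq : program -> program -> program
| PCup : program -> program -> program
| PStar : program -> program
| PTest : formula -> program.

(* A sequent Gamma => Delta of finite sets of formulas, represented by lists
   and always compared up to set equality. *)
Definition sequent : Type := (list formula * list formula)%type.

Definition sameset (l l' : list formula) : Prop := forall x, In x l <-> In x l'.
Definition seqeq (s s' : sequent) : Prop := sameset (fst s) (fst s') /\ sameset (snd s) (snd s').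

Inductive rlabel : Type :=
| RAx | RBot
| RImpL (phi psi : formula) | RImpR (phi psi : formula)
| RWk
| RCut (phi : formula)
| RBox (pi : program) (phi : formula)
| RBBox (pi : program) (phi : formula)
| RSeqL (p0 p1 : program) (phi : formula) | RSeqR (p0 p1 : program) (phi : formula)
| RCupL (p0 p1 : program) (phi : formula) | RCupR (p0 p1 : program) (phi : formula)
| RStarL (pi : program) (phi : formula)
| RTestL (phi psi : formula) | RTestR (phi psi : formula)
| RStarR (pi : program) (phi : formula)
| RCs (pi : program) (phi : formula).

Definition inst (r : rlabel) (ps : list sequent) (c : sequent) : Prop :=
  match r, ps with
  | RAx, [] => exists phi, In phi (fst c) /\ In phi (snd c)
  | RBot, [] => In FBot (fst c)
  | RImpL phi psi, [p1; p2] => exists G D,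
      seqeq c (FImp phi psi :: G, D) /\ seqeq p1 (G, phi :: D) /\ seqeq p2 (psi :: G, D)
  | RImpR phi psi, [p] => exists G D,
      seqeq c (G, FImp phi psi :: D) /\ seqeq p (phi :: G, psi :: D)
  | RWk, [p] => incl (fst p) (fst c) /\ incl (snd p) (snd c)
  | RCut phi, [p1; p2] => exists G D,
      seqeq c (G, D) /\ seqeq p1 (G, phi :: D) /\ seqeq p2 (phi :: G, D)
  | RBox pi phi, [p] => exists G D,
      seqeq c (map (FBox pi) G, FBox pi phi :: D) /\ seqeq p (G, phi :: map (FBBox pi) D)
  | RBBox pi phi, [p] => exists G D,
      seqeq c (map (FBBox pi) G, FBBox pi phi :: D) /\ seqeq p (G, phi :: map (FBox pi) D)
  | RSeqL p0 p1 phi, [p] => exists G D,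
      seqeq c (FBox (PSeq p0 p1) phi :: G, D) /\ seqeq p (FBox p0 (FBox p1 phi) :: G, D)
  | RSeqR p0 p1 phi, [p] => exists G D,
      seqeq c (G, FBox (PSeq p0 p1) phi :: D) /\ seqeq p (G, FBox p0 (FBox p1 phi) :: D)
  | RCupL p0 p1 phi, [p] => exists G D,
      seqeq c (FBox (PCup p0 p1) phi :: G, D) /\ seqeq p (FBox p0 phi :: FBox p1 phi :: G, D)
  | RCupR p0 p1 phi, [q0; q1] => exists G D,
      seqeq c (G, FBox (PCup p0 p1) phi :: D) /\
      seqeq q0 (G, FBox p0 phi :: D) /\ seqeq q1 (G, FBox p1 phi :: D)
  | RStarL pi phi, [p] => exists G D,
      seqeq c (FBox (PStar pi) phi :: G, D) /\
      seqeq p (phi :: FBox pi (FBox (PStar pi) phi) :: G, D)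
  | RTestL phi psi, [p1; p2] => exists G D,
      seqeq c (FBox (PTest phi) psi :: G, D) /\ seqeq p1 (G, phi :: D) /\ seqeq p2 (psi :: G, D)
  | RTestR phi psi, [p] => exists G D,
      seqeq c (G, FBox (PTest phi) psi :: D) /\ seqeq p (phi :: G, psi :: D)
  | RStarR pi phi, [p] => exists G,
      seqeq c (phi :: map (FBox (PStar pi)) G, [FBox (PStar pi) phi]) /\
      seqeq p (phi :: G, [FBox pi phi])
  | RCs pi phi, [q0; q1] => exists G D,
      seqeq c (G, FBox (PStar pi) phi :: D) /\
      seqeq q0 (G, phi :: D) /\ seqeq q1 (G, FBox pi (FBox (PStar pi) phi) :: D)
  | _, _ => False
  end.

Definition is_cut (r : rlabel) : Prop := match r with RCut _ => True | _ => False end.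

Definition common_rule (r : rlabel) : Prop :=
  match r with RStarR _ _ | RCs _ _ => False | _ => True end.
Definition G_rule (r : rlabel) : Prop :=
  match r with RCs _ _ => False | _ => True end.
Definition C_rule (r : rlabel) : Prop :=
  match r with RStarR _ _ => False | _ => True end.

Fixpoint FL (f : formula) : list formula :=
  match f with
  | FBot => [FBot]
  | FVar p => [FVar p]
  | FImp a b => FImp a b :: FL a ++ FL b
  | FBox pi psi => FLbox pi psi ++ FL psi
  | FBBox pi psi => FLbbox pi psi ++ FL psi
  end
with FLbox (pi : program) (psi : formula) : list formula :=
  match pi with
  | PAtom a => [FBox (PAtom a) psi]
  | PSeq p0 p1 => FBox (PSeq p0 p1) psi :: FLbox p0 (FBox p1 psi) ++ FLbox p1 psi
  | PCup p0 p1 => FBox (PCup p0 p1) psi :: FLbox p0 psi ++ FLbox p1 psi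
  | PStar p => FBox (PStar p) psi :: FLbox p (FBox (PStar p) psi)
  | PTest f0 => FBox (PTest f0) psi :: FL f0
  end
with FLbbox (pi : program) (psi : formula) : list formula :=
  match pi with
  | PAtom a => [FBBox (PAtom a) psi]
  | PSeq p0 p1 => FBBox (PSeq p0 p1) psi :: FLbbox p1 (FBBox p0 psi) ++ FLbbox p0 psi
  | PCup p0 p1 => FBBox (PCup p0 p1) psi :: FLbbox p0 psi ++ FLbbox p1 psi
  | PStar p => FBBox (PStar p) psi :: FLbbox p (FBBox (PStar p) psi)
  | PTest f0 => FBBox (PTest f0) psi :: FL f0
  end.

Definition FLset (l : list formula) : list formula := flat_map FL l.

Inductive ptree : Type :=
| PNode : sequent -> rlabel -> list ptree -> ptree
| PBud : sequent -> ptree.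

Definition root_seq (t : ptree) : sequent :=
  match t with PNode s _ _ => s | PBud s => s end.

Fixpoint subtree_at (t : ptree) (a : list nat) : option ptree :=
  match a with
  | [] => Some t
  | k :: a' =>
      match t with
      | PNode _ _ ts => match nth_error ts k with
                        | Some t' => subtree_at t' a'
                        | None => None
                        end
      | PBud _ => None
      end
  end.

Definition locally_correct (allowed : rlabel -> Prop) (t : ptree) : Prop :=
  forall a s r ts, subtree_at t a = Some (PNode s r ts) ->
    allowed r /\ inst r (map root_seq ts) s.

Definition no_buds (t : ptree) : Prop := forall a s, subtree_at t a <> Some (PBud s).
Definition cut_free (t : ptree) : Prop :=
  forall a s r ts, subtree_at t a = Some (PNode s r ts) -> ~ is_cut r.
Definition FL_cuts (t : ptree) : Prop :=
  forall a s phi ts, subtree_at t a = Some (PNode s (RCut phi) ts) ->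
    In phi (FLset (fst s ++ snd s)).

Definition G_proof (t : ptree) : Prop := no_buds t /\ locally_correct G_rule t.
Definition G_provable (S : sequent) : Prop := exists t, G_proof t /\ seqeq (root_seq t) S.
Definition G_cutfree_provable (S : sequent) : Prop :=
  exists t, G_proof t /\ cut_free t /\ seqeq (root_seq t) S.
Definition G_FLcut_provable (S : sequent) : Prop :=
  exists t, G_proof t /\ FL_cuts t /\ seqeq (root_seq t) S.

Definition companions_ok (t : ptree) (comp : list nat -> list nat) : Prop :=
  forall a s, subtree_at t a = Some (PBud s) ->
    exists s' r ts, subtree_at t (comp a) = Some (PNode s' r ts) /\ seqeq s s'.

(* one edge of the graph obtained by identifying buds with their companions:
   from inner node at address a, through its k-th premise, to inner node b *)
Definition edge (t : ptree) (comp : list nat -> list nat) (a : list nat) (k : nat) (b : list nat) : Prop :=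
  exists s r ts c, subtree_at t a = Some (PNode s r ts) /\ nth_error ts k = Some c /\
    match c with
    | PNode _ _ _ => b = a ++ [k]
    | PBud _ => b = comp (a ++ [k])
    end.

Definition passes (r : rlabel) (k : nat) (tau tau' : formula) : Prop :=
  match r, k with
  | RImpR phi psi, 0 => tau = FImp phi psi /\ tau' = psi
  | RSeqR p0 p1 phi, 0 => tau = FBox (PSeq p0 p1) phi /\ tau' = FBox p0 (FBox p1 phi)
  | RCupR p0 p1 phi, 0 => tau = FBox (PCup p0 p1) phi /\ tau' = FBox p0 phi
  | RCupR p0 p1 phi, 1 => tau = FBox (PCup p0 p1) phi /\ tau' = FBox p1 phi
  | RTestR phi psi, 0 => tau = FBox (PTest phi) psi /\ tau' = psi
  | RCs pi phi, 0 => tau = FBox (PStar pi) phi /\ tau' = phi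
  | RCs pi phi, 1 => tau = FBox (PStar pi) phi /\ tau' = FBox pi (FBox (PStar pi) phi)
  | RBox pi phi, 0 => tau = FBox pi phi /\ tau' = phi
  | RBBox pi phi, 0 => tau = FBBox pi phi /\ tau' = phi
  | _, _ => False
  end.

Definition trace_step (r : rlabel) (k : nat) (tau tau' : formula) : Prop :=
  match r with
  | RBox _ _ | RBBox _ _ => passes r k tau tau'
  | _ => tau' = tau \/ passes r k tau tau'
  end.

Definition progress (r : rlabel) (k : nat) (tau tau' : formula) : Prop :=
  match r, k with
  | RCs pi phi, 1 => tau = FBox (PStar pi) phi /\ tau' = FBox pi (FBox (PStar pi) phi)
  | _, _ => False
  end.

Definition inf_path (t : ptree) (comp : list nat -> list nat) (v : nat -> list nat) (k : nat -> nat) : Prop :=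
  forall i, edge t comp (v i) (k i) (v (S i)).

Definition trace_from (t : ptree) (v : nat -> list nat) (k : nat -> nat) (N : nat) (tau : nat -> formula) : Prop :=
  forall i, N <= i ->
    exists s r ts s' r' ts',
      subtree_at t (v i) = Some (PNode s r ts) /\
      subtree_at t (v (S i)) = Some (PNode s' r' ts') /\
      In (tau i) (snd s) /\ In (tau (S i)) (snd s') /\
      trace_step r (k i) (tau i) (tau (S i)).

Definition progresses_infinitely (t : ptree) (v : nat -> list nat) (k : nat -> nat) (tau : nat -> formula) : Prop :=
  forall n, exists i, n <= i /\
    exists s r ts, subtree_at t (v i) = Some (PNode s r ts) /\ progress r (k i) (tau i) (tau (S i)).

Definition global_condition (t : ptree) (comp : list nat -> list nat) : Prop :=
  forall v k, inf_path t comp v k ->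
    exists N tau, trace_from t v k N tau /\ progresses_infinitely t v k tau.

Definition C_proof (t : ptree) (comp : list nat -> list nat) : Prop :=
  locally_correct C_rule t /\ companions_ok t comp /\ global_condition t comp.

Definition C_provable (S : sequent) : Prop :=
  exists t comp, C_proof t comp /\ seqeq (root_seq t) S.
Definition C_cutfree_provable (S : sequent) : Prop :=
  exists t comp, C_proof t comp /\ cut_free t /\ seqeq (root_seq t) S.

(* Main.v *)
Require Import Defs.
From Stdlib Require Import List Arith Lia Classical ClassicalEpsilon Relations Bool.
Import ListNotations.

Fixpoint sat {W : Type} (R : nat -> W -> W -> Prop) (V : nat -> W -> Prop) (w : W) (f : formula) {struct f} : Prop :=
  match f with
  | FBot => False
  | FVar n => V n w
  | FImp a b => sat R V w a -> sat R V w b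
  | FBox p a => forall v, rel R V p w v -> sat R V v a
  | FBBox p a => forall v, rel R V p v w -> sat R V v a
  end
with rel {W : Type} (R : nat -> W -> W -> Prop) (V : nat -> W -> Prop) (p : program) {struct p} : W -> W -> Prop :=
  match p with
  | PAtom n => R n
  | PSeq p0 p1 => fun x y => exists z, rel R V p0 x z /\ rel R V p1 z y
  | PCup p0 p1 => fun x y => rel R V p0 x y \/ rel R V p1 x y
  | PStar p0 => clos_refl_trans_1n W (rel R V p0)
  | PTest f0 => fun x y => x = y /\ sat R V x f0
  end.

Definition refw {W : Type} (R : nat -> W -> W -> Prop) (V : nat -> W -> Prop) (w : W) (S : sequent) : Prop :=
  (forall f, In f (fst S) -> sat R V w f) /\ (forall f, In f (snd S) -> ~ sat R V w f).

Definition refuted (S : sequent) : Prop :=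
  exists (W : Type) (R : nat -> W -> W -> Prop) (V : nat -> W -> Prop) (w : W), refw R V w S.

Lemma refw_seqeq {W} R V (w : W) S S' : seqeq S S' -> refw R V w S -> refw R V w S'.
Proof.
  intros [H1 H2] [A B]; split; intros f Hf; [apply A; apply H1; auto | apply B; apply H2; auto].
Qed.

Lemma refuted_seqeq S S' : seqeq S S' -> refuted S -> refuted S'.
Proof. intros H (W & R & V & w & Hw). exists W, R, V, w. eapply refw_seqeq; eauto. Qed.

Ltac sq H := destruct H as [?H1 ?H2]; unfold sameset in *; simpl in *.

Lemma sound {W} R V (w : W) r ps c :
  inst r ps c -> refw R V w c -> exists p w', In p ps /\ refw R V w' p.
Proof.
  intros Hi [HL HR].
  destruct r; destruct ps as [|q1 [|q2 [|q3 ps]]]; simpl in Hi; try contradiction.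
  - destruct Hi as (phi & H1 & H2). exfalso. exact (HR _ H2 (HL _ H1)).
  - exfalso; exact (HL _ Hi).
  - destruct Hi as (G & D & [Hc1 Hc2] & [Ha1 Ha2] & [Hb1 Hb2]).
    assert (Himp : sat R V w (FImp phi psi)) by (apply HL, Hc1; left; auto).
    destruct (classic (sat R V w phi)) as [Hp|Hp].
    + exists q2, w. split; [simpl; auto|]. split.
      * intros f Hf. apply Hb1 in Hf. destruct Hf as [<-|Hf]; [simpl in Himp; auto|]. apply HL, Hc1. right; auto.
      * intros f Hf. apply Hb2 in Hf. apply HR, Hc2. auto.
    + exists q1, w. split; [simpl; auto|]. split.
      * intros f Hf. apply Ha1 in Hf. apply HL, Hc1. right; auto.
      * intros f Hf. apply Ha2 in Hf. destruct Hf as [<-|Hf]; auto. apply HR, Hc2. auto.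
  - destruct Hi as (G & D & [Hc1 Hc2] & [Ha1 Ha2]).
    assert (Himp : ~ sat R V w (FImp phi psi)) by (apply HR, Hc2; left; auto).
    simpl in Himp.
    exists q1, w. split; [simpl; auto|]. split.
    * intros f Hf. apply Ha1 in Hf. destruct Hf as [<-|Hf].
      { apply NNPP; intro; apply Himp; intro; contradiction. }
      apply HL, Hc1. auto.
    * intros f Hf. apply Ha2 in Hf. destruct Hf as [<-|Hf].
      { intro; apply Himp; auto. }
      apply HR, Hc2. right; auto.
  - destruct Hi as [H1 H2]. exists q1, w. split; [simpl; auto|]. split; intros f Hf; auto.
  - destruct Hi as (G & D & [Hc1 Hc2] & [Ha1 Ha2] & [Hb1 Hb2]).
    destruct (classic (sat R V w phi)) as [Hp|Hp].
    + exists q2, w. split; [simpl; auto|]. split.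
      * intros f Hf. apply Hb1 in Hf. destruct Hf as [<-|Hf]; auto. apply HL, Hc1; simpl; auto.
      * intros f Hf. apply Hb2 in Hf. apply HR, Hc2. auto.
    + exists q1, w. split; [simpl; auto|]. split.
      * intros f Hf. apply Ha1 in Hf. apply HL, Hc1. auto.
      * intros f Hf. apply Ha2 in Hf. destruct Hf as [<-|Hf]; auto. apply HR, Hc2. auto.
  - destruct Hi as (G & D & [Hc1 Hc2] & [Ha1 Ha2]).
    assert (Hb : ~ sat R V w (FBox pi phi)) by (apply HR, Hc2; left; auto).
    simpl in Hb. apply not_all_ex_not in Hb. destruct Hb as [v Hv].
    apply imply_to_and in Hv. destruct Hv as [Hrel Hv].
    exists q1, v. split; [simpl; auto|]. split.
    * intros f Hf. apply Ha1 in Hf.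
      assert (sat R V w (FBox pi f)) by (apply HL, Hc1, in_map; auto).
      simpl in H. auto.
    * intros f Hf. apply Ha2 in Hf. destruct Hf as [<-|Hf]; auto.
      apply in_map_iff in Hf. destruct Hf as (d & <- & Hd).
      simpl. intro Hs. apply (HR d). apply Hc2; right; auto. apply Hs. auto.
  - destruct Hi as (G & D & [Hc1 Hc2] & [Ha1 Ha2]).
    assert (Hb : ~ sat R V w (FBBox pi phi)) by (apply HR, Hc2; left; auto).
    simpl in Hb. apply not_all_ex_not in Hb. destruct Hb as [v Hv].
    apply imply_to_and in Hv. destruct Hv as [Hrel Hv].
    exists q1, v. split; [simpl; auto|]. split.
    * intros f Hf. apply Ha1 in Hf.
      assert (sat R V w (FBBox pi f)) by (apply HL, Hc1, in_map; auto).
      simpl in H. auto.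
    * intros f Hf. apply Ha2 in Hf. destruct Hf as [<-|Hf]; auto.
      apply in_map_iff in Hf. destruct Hf as (d & <- & Hd).
      simpl. intro Hs. apply (HR d). apply Hc2; right; auto. apply Hs. auto.
- destruct Hi as (G & D & [Hc1 Hc2] & [Ha1 Ha2]).
    assert (Hb : sat R V w (FBox (PSeq p0 p1) phi)) by (apply HL, Hc1; left; auto).
    exists q1, w. split; [simpl; auto|]. split.
    * intros f Hf. apply Ha1 in Hf. destruct Hf as [<-|Hf]; [|apply HL, Hc1; simpl; auto].
      simpl in *. intros v Hv u Hu. apply Hb. exists v; auto.
    * intros f Hf. apply Ha2 in Hf. apply HR, Hc2; simpl; auto.
  - destruct Hi as (G & D & [Hc1 Hc2] & [Ha1 Ha2]).
    assert (Hb : ~ sat R V w (FBox (PSeq p0 p1) phi)) by (apply HR, Hc2; left; auto).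
    exists q1, w. split; [simpl; auto|]. split.
    * intros f Hf. apply Ha1 in Hf. apply HL, Hc1; simpl; auto.
    * intros f Hf. apply Ha2 in Hf. destruct Hf as [<-|Hf]; [|apply HR, Hc2; simpl; auto].
      simpl in *. intro Hs. apply Hb. intros v (z & H1 & H2). eapply Hs; eauto.
  - destruct Hi as (G & D & [Hc1 Hc2] & [Ha1 Ha2]).
    assert (Hb : sat R V w (FBox (PCup p0 p1) phi)) by (apply HL, Hc1; left; auto).
    exists q1, w. split; [simpl; auto|]. split.
    * intros f Hf. apply Ha1 in Hf. simpl in Hb.
      destruct Hf as [<-|[<-|Hf]]; [simpl; auto| simpl; auto |apply HL, Hc1; simpl; auto].
    * intros f Hf. apply Ha2 in Hf. apply HR, Hc2; simpl; auto.
  - destruct Hi as (G & D & [Hc1 Hc2] & [Ha1 Ha2] & [Hb1 Hb2]).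
    assert (Hb : ~ sat R V w (FBox (PCup p0 p1) phi)) by (apply HR, Hc2; left; auto).
    simpl in Hb.
    destruct (classic (sat R V w (FBox p0 phi))) as [H0|H0].
    + exists q2, w. split; [simpl; auto|]. split.
      * intros f Hf. apply Hb1 in Hf. apply HL, Hc1; simpl; auto.
      * intros f Hf. apply Hb2 in Hf. destruct Hf as [<-|Hf]; [|apply HR, Hc2; simpl; auto].
        simpl in *. intro Hs. apply Hb. intros v [Hv|Hv]; auto.
    + exists q1, w. split; [simpl; auto|]. split.
      * intros f Hf. apply Ha1 in Hf. apply HL, Hc1; simpl; auto.
      * intros f Hf. apply Ha2 in Hf. destruct Hf as [<-|Hf]; [auto|apply HR, Hc2; simpl; auto].
  - destruct Hi as (G & D & [Hc1 Hc2] & [Ha1 Ha2]).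
    assert (Hb : sat R V w (FBox (PStar pi) phi)) by (apply HL, Hc1; left; auto).
    exists q1, w. split; [simpl; auto|]. split.
    * intros f Hf. apply Ha1 in Hf. simpl in Hb.
      destruct Hf as [<-|[<-|Hf]]; [| |apply HL, Hc1; simpl; auto].
      { apply Hb. constructor. }
      simpl. intros v Hv u Hu. apply Hb. econstructor; eauto.
    * intros f Hf. apply Ha2 in Hf. apply HR, Hc2; simpl; auto.
  - destruct Hi as (G & D & [Hc1 Hc2] & [Ha1 Ha2] & [Hb1 Hb2]).
    assert (Hb : sat R V w (FBox (PTest phi) psi)) by (apply HL, Hc1; left; auto).
    simpl in Hb.
    destruct (classic (sat R V w phi)) as [Hp|Hp].
    + exists q2, w. split; [simpl; auto|]. split.
      * intros f Hf. apply Hb1 in Hf. destruct Hf as [<-|Hf]; [auto|apply HL, Hc1; simpl; auto].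
      * intros f Hf. apply Hb2 in Hf. apply HR, Hc2; simpl; auto.
    + exists q1, w. split; [simpl; auto|]. split.
      * intros f Hf. apply Ha1 in Hf. apply HL, Hc1; simpl; auto.
      * intros f Hf. apply Ha2 in Hf. destruct Hf as [<-|Hf]; [auto|apply HR, Hc2; simpl; auto].
  - destruct Hi as (G & D & [Hc1 Hc2] & [Ha1 Ha2]).
    assert (Hb : ~ sat R V w (FBox (PTest phi) psi)) by (apply HR, Hc2; left; auto).
    simpl in Hb.
    exists q1, w. split; [simpl; auto|]. split.
    * intros f Hf. apply Ha1 in Hf. destruct Hf as [<-|Hf]; [|apply HL, Hc1; simpl; auto].
      apply NNPP; intro; apply Hb; intros v [_ Hv]; contradiction.
    * intros f Hf. apply Ha2 in Hf. destruct Hf as [<-|Hf]; [|apply HR, Hc2; simpl; auto].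
      intro Hs; apply Hb; intros v [<- _]; auto.
  - destruct Hi as (G & [Hc1 Hc2] & [Ha1 Ha2]).
    assert (Hb : ~ sat R V w (FBox (PStar pi) phi)) by (apply HR, Hc2; left; auto).
    assert (Hphi : sat R V w phi) by (apply HL, Hc1; left; auto).
    assert (HG : forall g, In g G -> sat R V w (FBox (PStar pi) g))
      by (intros g Hg; apply HL, Hc1; right; apply in_map; auto).
    simpl in Hb. apply not_all_ex_not in Hb. destruct Hb as [v Hv].
    apply imply_to_and in Hv. destruct Hv as [Hrel Hv].
    assert (Key : forall x, clos_refl_trans_1n W (rel R V pi) x v -> sat R V x phi ->
              (forall g, In g G -> sat R V x (FBox (PStar pi) g)) ->
              exists y, sat R V y phi /\ (forall g, In g G -> sat R V y g) /\ ~ sat R V y (FBox pi phi)).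
    { intros x Hx. induction Hx as [x|x y z Hxy Hyz IH]; intros Hpx HGx.
      - contradiction.
      - destruct (classic (sat R V y phi)) as [Hy|Hy].
        + apply IH; auto. intros g Hg. simpl. intros u Hu. apply (HGx g Hg). econstructor; eauto.
        + exists x. split; auto. split.
          * intros g Hg. apply (HGx g Hg). constructor.
          * simpl. intro H. apply Hy. auto. }
    destruct (Key w Hrel Hphi HG) as (y & Hy1 & Hy2 & Hy3).
    exists q1, y. split; [simpl; auto|]. split.
    * intros f Hf. apply Ha1 in Hf. destruct Hf as [<-|Hf]; auto.
    * intros f Hf. apply Ha2 in Hf. destruct Hf as [<-|[]]; auto.
  - destruct Hi as (G & D & [Hc1 Hc2] & [Ha1 Ha2] & [Hb1 Hb2]).
    assert (Hb : ~ sat R V w (FBox (PStar pi) phi)) by (apply HR, Hc2; left; auto).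
    simpl in Hb. apply not_all_ex_not in Hb. destruct Hb as [v Hv].
    apply imply_to_and in Hv. destruct Hv as [Hrel Hv].
    inversion Hrel as [|x y z Hxy Hyz]; subst.
    + exists q1, v. split; [simpl; auto|]. split.
      * intros f Hf. apply Ha1 in Hf. apply HL, Hc1; simpl; auto.
      * intros f Hf. apply Ha2 in Hf. destruct Hf as [<-|Hf]; [auto|apply HR, Hc2; simpl; auto].
    + exists q2, w. split; [simpl; auto|]. split.
      * intros f Hf. apply Hb1 in Hf. apply HL, Hc1; simpl; auto.
      * intros f Hf. apply Hb2 in Hf. destruct Hf as [<-|Hf]; [|apply HR, Hc2; simpl; auto].
        simpl. intro Hs. apply Hv. eapply Hs; eauto.
Qed.

Lemma sound_ref r ps c : inst r ps c -> refuted c -> exists p, In p ps /\ refuted p.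
Proof.
  intros Hi (W & R & V & w & Hw). destruct (sound R V w r ps c Hi Hw) as (p & w' & Hp & Hw').
  exists p. split; auto. exists W, R, V, w'. auto.
Qed.

Lemma subtree_app t a b :
  subtree_at t (a ++ b) = match subtree_at t a with Some t' => subtree_at t' b | None => None end.
Proof.
  revert t; induction a as [|k a IH]; intros t; simpl; auto.
  destruct t as [s r ts|s]; auto. destruct (nth_error ts k); auto.
Qed.

Fixpoint height (t : ptree) : nat :=
  match t with
  | PNode _ _ ts => S (list_max (map height ts))
  | PBud _ => 0
  end.

Lemma height_child s r ts k c : nth_error ts k = Some c -> height c < height (PNode s r ts).
Proof.
  intros H. simpl. apply Nat.lt_succ_r.
  assert (Hin : In (height c) (map height ts)) by (apply in_map; eapply nth_error_In; eauto).
  assert (Hle := proj1 (list_max_le (map height ts) (list_max (map height ts))) (le_n _)).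
  rewrite Forall_forall in Hle. auto.
Qed.

Lemma G_engine (Bad : sequent -> Prop) (allowed : rlabel -> Prop) (Q : sequent -> rlabel -> Prop)
  (Hbad : forall c r ps, Bad c -> allowed r -> Q c r -> inst r ps c -> exists p, In p ps /\ Bad p) :
  forall t, no_buds t -> locally_correct allowed t ->
    (forall a s r ts, subtree_at t a = Some (PNode s r ts) -> Q s r) -> ~ Bad (root_seq t).
Proof.
  assert (forall n t, height t < n -> no_buds t -> locally_correct allowed t ->
    (forall a s r ts, subtree_at t a = Some (PNode s r ts) -> Q s r) -> ~ Bad (root_seq t)).
  { induction n as [|n IH]; intros t Hh Hnb Hlc HQ HB; [lia|].
    destruct t as [s r ts|s].
    2:{ apply (Hnb [] s). reflexivity. }
    destruct (Hlc [] s r ts eq_refl) as [Ha Hi].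
    specialize (HQ [] s r ts eq_refl) as HQ0.
    destruct (Hbad _ _ _ HB Ha HQ0 Hi) as (p & Hp & HBp).
    apply in_map_iff in Hp. destruct Hp as (c & <- & Hc).
    destruct (In_nth_error _ _ Hc) as [k Hk].
    pose proof (height_child s r ts k c Hk).
    apply (IH c); auto; [lia| | |].
    - intros a s' Hs. apply (Hnb (k :: a) s'). simpl. rewrite Hk. auto.
    - intros a s' r' ts' Hs. apply (Hlc (k :: a)). simpl. rewrite Hk. auto.
    - intros a s' r' ts' Hs. apply (HQ (k :: a) s' r' ts'). simpl. rewrite Hk. auto. }
  intros t. apply (H (S (height t))). lia.
Qed.

Definition BadNode (Bad : sequent -> Prop) (t : ptree) (a : list nat) : Prop :=
  exists s r ts, subtree_at t a = Some (PNode s r ts) /\ Bad s.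

Definition nextnode (P : list nat -> Prop) (E : list nat -> nat -> list nat -> Prop)
  (H : forall a, P a -> exists k b, E a k b /\ P b) (a : list nat) (Ha : P a) :
  {kb : nat * list nat | E a (fst kb) (snd kb) /\ P (snd kb)}.
Proof.
  apply constructive_indefinite_description.
  destruct (H a Ha) as (k & b & H1 & H2). exists (k, b). simpl; auto.
Defined.

Fixpoint walk (P : list nat -> Prop) (E : list nat -> nat -> list nat -> Prop)
  (H : forall a, P a -> exists k b, E a k b /\ P b) (a0 : list nat) (H0 : P a0) (n : nat) : {a | P a} :=
  match n with
  | 0 => exist _ a0 H0
  | S n => let x := walk P E H a0 H0 n in
           exist _ (snd (proj1_sig (nextnode P E H (proj1_sig x) (proj2_sig x))))
                   (proj2 (proj2_sig (nextnode P E H (proj1_sig x) (proj2_sig x))))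
  end.

Lemma walk_path (P : list nat -> Prop) (E : list nat -> nat -> list nat -> Prop)
  (H : forall a, P a -> exists k b, E a k b /\ P b) (a0 : list nat) (H0 : P a0) :
  exists v k, (forall i, E (v i) (k i) (v (S i))) /\ (forall i, P (v i)) /\ v 0 = a0.
Proof.
  exists (fun i => proj1_sig (walk P E H a0 H0 i)).
  exists (fun i => fst (proj1_sig (nextnode P E H (proj1_sig (walk P E H a0 H0 i)) (proj2_sig (walk P E H a0 H0 i))))).
  split; [|split].
  - intros i. simpl. exact (proj1 (proj2_sig (nextnode P E H _ _))).
  - intros i. exact (proj2_sig (walk P E H a0 H0 i)).
  - reflexivity.
Qed.

Lemma C_engine (Bad : sequent -> Prop)
  (Hseq : forall S S', seqeq S S' -> Bad S -> Bad S')
  (Hbad : forall c r ps, Bad c -> C_rule r -> ~ is_cut r -> inst r ps c -> exists p, In p ps /\ Bad p)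
  (Hnostar : forall c pi phi, Bad c -> ~ In (FBox (PStar pi) phi) (snd c)) :
  forall t comp, C_proof t comp -> cut_free t -> ~ Bad (root_seq t).
Proof.
  intros t comp (Hlc & Hco & Hgc) Hcf HB.
  assert (Hstep : forall a, BadNode Bad t a -> exists k b, edge t comp a k b /\ BadNode Bad t b).
  { intros a (s & r & ts & Hs & HBs).
    destruct (Hlc a s r ts Hs) as [Ha Hi].
    destruct (Hbad _ _ _ HBs Ha (Hcf a s r ts Hs) Hi) as (p & Hp & HBp).
    apply in_map_iff in Hp. destruct Hp as (c & <- & Hc).
    destruct (In_nth_error _ _ Hc) as [k Hk].
    destruct c as [s' r' ts'|s'].
    - exists k, (a ++ [k]). split.
      + exists s, r, ts, (PNode s' r' ts'). auto.
      + exists s', r', ts'. split; auto. rewrite subtree_app, Hs. simpl. rewrite Hk. auto.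
    - exists k, (comp (a ++ [k])). split.
      + exists s, r, ts, (PBud s'). auto.
      + destruct (Hco (a ++ [k]) s') as (s'' & r'' & ts'' & H1 & H2).
        { rewrite subtree_app, Hs. simpl. rewrite Hk. auto. }
        exists s'', r'', ts''. split; auto. eapply Hseq; eauto. }
  assert (H0 : BadNode Bad t []).
  { destruct t as [s r ts|s].
    - exists s, r, ts. auto.
    - destruct (Hco [] s eq_refl) as (s' & r' & ts' & H1 & _).
      destruct (comp []); simpl in H1; discriminate. }
  destruct (walk_path _ _ Hstep [] H0) as (v & k & Hp & HBv & _).
  destruct (Hgc v k Hp) as (N & tau & _ & Hprog).
  destruct (Hprog N) as (i & _ & s & r & ts & Hs & Hpr).
  destruct r; simpl in Hpr; try contradiction; destruct (k i) as [|[|]]; try contradiction.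
  destruct (Hlc _ _ _ _ Hs) as [_ Hi].
  destruct (HBv i) as (s0 & r0 & ts0 & Hs0 & HB0).
  rewrite Hs in Hs0. injection Hs0; intros; subst.
  destruct ts0 as [|t1 [|t2 [|t3 ts0]]]; simpl in Hi; try contradiction.
  destruct Hi as (G & D & [_ Hc2] & _).
  apply (Hnostar s0 pi phi HB0). apply Hc2. simpl; auto.
Qed.

Fixpoint sff (f : formula) : bool :=
  match f with
  | FBot | FVar _ => true
  | FImp a b => sff a && sff b
  | FBox p a | FBBox p a => sfp p && sff a
  end
with sfp (p : program) : bool :=
  match p with
  | PAtom _ => true
  | PSeq a b | PCup a b => sfp a && sfp b
  | PStar _ => false
  | PTest f => sff f
  end.

Definition sfseq (S : sequent) : Prop := forall f, In f (fst S) \/ In f (snd S) -> sff f = true.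

Lemma sfL c L f : sfseq c -> sameset (fst c) L -> In f L -> sff f = true.
Proof. intros H HL Hf. apply H. left. apply HL. auto. Qed.
Lemma sfR c L f : sfseq c -> sameset (snd c) L -> In f L -> sff f = true.
Proof. intros H HL Hf. apply H. right. apply HL. auto. Qed.

Ltac sfprem Hsf :=
  match goal with
  | [ Hq : sameset (fst ?q) _, Hq' : sameset (snd ?q) _ |- sfseq ?q ] =>
      let f := fresh "f" in let Hf := fresh "Hf" in
      intros f [Hf|Hf]; [apply Hq in Hf | apply Hq' in Hf]; simpl in Hf
  end.

Lemma sf_pres r ps c : inst r ps c -> ~ is_cut r -> sfseq c -> forall p, In p ps -> sfseq p.
Proof.
  intros Hi Hcut Hsf p Hp.
  destruct r; destruct ps as [|q1 [|q2 [|q3 ps]]]; simpl in Hi; try contradiction;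
    simpl in Hp; repeat (destruct Hp as [Hp|Hp]; [subst|]); try contradiction.
  - destruct Hi as (G & D & [Hc1 Hc2] & [Ha1 Ha2] & _). simpl in *.
    assert (Hx := sfL _ _ _ Hsf Hc1 (or_introl eq_refl)). simpl in Hx. apply andb_true_iff in Hx as [Hx1 Hx2].
    sfprem Hsf.
    + eapply sfL; eauto. right; auto.
    + destruct Hf as [<-|Hf]; auto. eapply sfR; eauto.
  - destruct Hi as (G & D & [Hc1 Hc2] & _ & [Ha1 Ha2]). simpl in *.
    assert (Hx := sfL _ _ _ Hsf Hc1 (or_introl eq_refl)). simpl in Hx. apply andb_true_iff in Hx as [Hx1 Hx2].
    sfprem Hsf.
    + destruct Hf as [<-|Hf]; auto. eapply sfL; eauto. right; auto.
    + eapply sfR; eauto.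
  - destruct Hi as (G & D & [Hc1 Hc2] & [Ha1 Ha2]). simpl in *.
    assert (Hx := sfR _ _ _ Hsf Hc2 (or_introl eq_refl)). simpl in Hx. apply andb_true_iff in Hx as [Hx1 Hx2].
    sfprem Hsf.
    + destruct Hf as [<-|Hf]; auto. eapply sfL; eauto.
    + destruct Hf as [<-|Hf]; auto. eapply sfR; eauto. right; auto.
  - destruct Hi as [H1 H2]. intros f [Hf|Hf]; apply Hsf; [left|right]; auto.
  - exfalso; apply Hcut; simpl; auto.
  - exfalso; apply Hcut; simpl; auto.
  - destruct Hi as (G & D & [Hc1 Hc2] & [Ha1 Ha2]). simpl in *.
    assert (Hx := sfR _ _ _ Hsf Hc2 (or_introl eq_refl)). simpl in Hx. apply andb_true_iff in Hx as [Hx1 Hx2].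
    sfprem Hsf.
    + assert (Hy := sfL _ _ _ Hsf Hc1 (in_map (FBox pi) _ _ Hf)). simpl in Hy. apply andb_true_iff in Hy as [_ Hy]; auto.
    + destruct Hf as [<-|Hf]; auto. apply in_map_iff in Hf. destruct Hf as (d & <- & Hd).
      simpl. rewrite Hx1. simpl. eapply sfR; eauto. right; auto.
  - destruct Hi as (G & D & [Hc1 Hc2] & [Ha1 Ha2]). simpl in *.
    assert (Hx := sfR _ _ _ Hsf Hc2 (or_introl eq_refl)). simpl in Hx. apply andb_true_iff in Hx as [Hx1 Hx2].
    sfprem Hsf.
    + assert (Hy := sfL _ _ _ Hsf Hc1 (in_map (FBBox pi) _ _ Hf)). simpl in Hy. apply andb_true_iff in Hy as [_ Hy]; auto.
    + destruct Hf as [<-|Hf]; auto. apply in_map_iff in Hf. destruct Hf as (d & <- & Hd).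
      simpl. rewrite Hx1. simpl. eapply sfR; eauto. right; auto.
  - destruct Hi as (G & D & [Hc1 Hc2] & [Ha1 Ha2]). simpl in *.
    assert (Hx := sfL _ _ _ Hsf Hc1 (or_introl eq_refl)). simpl in Hx.
    apply andb_true_iff in Hx as [Hx1 Hx2]. apply andb_true_iff in Hx1 as [Hx1 Hx3].
    sfprem Hsf.
    + destruct Hf as [<-|Hf]. { simpl. rewrite Hx1, Hx3, Hx2. auto. } eapply sfL; eauto. right; auto.
    + eapply sfR; eauto.
  - destruct Hi as (G & D & [Hc1 Hc2] & [Ha1 Ha2]). simpl in *.
    assert (Hx := sfR _ _ _ Hsf Hc2 (or_introl eq_refl)). simpl in Hx.
    apply andb_true_iff in Hx as [Hx1 Hx2]. apply andb_true_iff in Hx1 as [Hx1 Hx3].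
    sfprem Hsf.
    + eapply sfL; eauto.
    + destruct Hf as [<-|Hf]. { simpl. rewrite Hx1, Hx3, Hx2. auto. } eapply sfR; eauto. right; auto.
  - destruct Hi as (G & D & [Hc1 Hc2] & [Ha1 Ha2]). simpl in *.
    assert (Hx := sfL _ _ _ Hsf Hc1 (or_introl eq_refl)). simpl in Hx.
    apply andb_true_iff in Hx as [Hx1 Hx2]. apply andb_true_iff in Hx1 as [Hx1 Hx3].
    sfprem Hsf.
    + destruct Hf as [<-|[<-|Hf]]; try (simpl; rewrite ?Hx1, ?Hx3, Hx2; auto; fail). eapply sfL; eauto. right; auto.
    + eapply sfR; eauto.
  - destruct Hi as (G & D & [Hc1 Hc2] & [Ha1 Ha2] & _). simpl in *.
    assert (Hx := sfR _ _ _ Hsf Hc2 (or_introl eq_refl)). simpl in Hx.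
    apply andb_true_iff in Hx as [Hx1 Hx2]. apply andb_true_iff in Hx1 as [Hx1 Hx3].
    sfprem Hsf.
    + eapply sfL; eauto.
    + destruct Hf as [<-|Hf]. { simpl. rewrite Hx1, Hx2. auto. } eapply sfR; eauto. right; auto.
  - destruct Hi as (G & D & [Hc1 Hc2] & _ & [Ha1 Ha2]). simpl in *.
    assert (Hx := sfR _ _ _ Hsf Hc2 (or_introl eq_refl)). simpl in Hx.
    apply andb_true_iff in Hx as [Hx1 Hx2]. apply andb_true_iff in Hx1 as [Hx1 Hx3].
    sfprem Hsf.
    + eapply sfL; eauto.
    + destruct Hf as [<-|Hf]. { simpl. rewrite Hx3, Hx2. auto. } eapply sfR; eauto. right; auto.
  - destruct Hi as (G & D & [Hc1 Hc2] & _). simpl in *.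
    assert (Hx := sfL _ _ _ Hsf Hc1 (or_introl eq_refl)). simpl in Hx. discriminate.
  - destruct Hi as (G & D & [Hc1 Hc2] & [Ha1 Ha2] & _). simpl in *.
    assert (Hx := sfL _ _ _ Hsf Hc1 (or_introl eq_refl)). simpl in Hx. apply andb_true_iff in Hx as [Hx1 Hx2].
    sfprem Hsf.
    + eapply sfL; eauto. right; auto.
    + destruct Hf as [<-|Hf]; auto. eapply sfR; eauto.
  - destruct Hi as (G & D & [Hc1 Hc2] & _ & [Ha1 Ha2]). simpl in *.
    assert (Hx := sfL _ _ _ Hsf Hc1 (or_introl eq_refl)). simpl in Hx. apply andb_true_iff in Hx as [Hx1 Hx2].
    sfprem Hsf.
    + destruct Hf as [<-|Hf]; auto. eapply sfL; eauto. right; auto.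
    + eapply sfR; eauto.
  - destruct Hi as (G & D & [Hc1 Hc2] & [Ha1 Ha2]). simpl in *.
    assert (Hx := sfR _ _ _ Hsf Hc2 (or_introl eq_refl)). simpl in Hx. apply andb_true_iff in Hx as [Hx1 Hx2].
    sfprem Hsf.
    + destruct Hf as [<-|Hf]; auto. eapply sfL; eauto.
    + destruct Hf as [<-|Hf]; auto. eapply sfR; eauto. right; auto.
  - destruct Hi as (G & [Hc1 Hc2] & _). simpl in *.
    assert (Hx := sfR _ _ _ Hsf Hc2 (or_introl eq_refl)). simpl in Hx. discriminate.
  - destruct Hi as (G & D & [Hc1 Hc2] & _). simpl in *.
    assert (Hx := sfR _ _ _ Hsf Hc2 (or_introl eq_refl)). simpl in Hx. discriminate.
  - destruct Hi as (G & D & [Hc1 Hc2] & _). simpl in *.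
    assert (Hx := sfR _ _ _ Hsf Hc2 (or_introl eq_refl)). simpl in Hx. discriminate.
Qed.

Definition a0 := PAtom 0.
Definition vp := FVar 0.
Definition negp := FImp vp FBot.
Definition X2 := FImp (FBBox a0 negp) FBot.
Definition BX2 := FBox a0 X2.
Definition S2 : sequent := ([vp], [BX2]).

Definition Region2 (S : sequent) : Prop := incl (fst S) [vp] /\ incl (snd S) [BX2].
Definition Bad2 (S : sequent) : Prop := Region2 S \/ (refuted S /\ sfseq S).

Lemma Bad2_seq S S' : seqeq S S' -> Bad2 S -> Bad2 S'.
Proof.
  intros [H1 H2] [[R1 R2]|[Hr Hs]].
  - left. split; intros f Hf; [apply R1, H1 | apply R2, H2]; auto.
  - right. split. eapply refuted_seqeq; eauto; split; auto.
    intros f [Hf|Hf]; apply Hs; [left; apply H1|right; apply H2]; auto.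
Qed.

Lemma Bad2_nostar c pi phi : Bad2 c -> ~ In (FBox (PStar pi) phi) (snd c).
Proof.
  intros [[R1 R2]|[Hr Hs]] Hin.
  - apply R2 in Hin. simpl in Hin. destruct Hin as [Hin|[]]. discriminate.
  - assert (H := Hs _ (or_intror Hin)). simpl in H. discriminate.
Qed.

Definition R2m (n : nat) (x y : bool) : Prop := x = true /\ y = false.
Definition V2m (n : nat) (x : bool) : Prop := False.

Lemma X2_false : ~ sat R2m V2m false X2.
Proof. unfold X2, negp, a0, vp; simpl. intro H. exact (H (fun v _ Hv => Hv)). Qed.

Lemma BBX2_false : ~ sat R2m V2m false (FBBox a0 BX2).
Proof. intro H. apply X2_false. exact (H true (conj eq_refl eq_refl) false (conj eq_refl eq_refl)). Qed.

Lemma Hbad2 c r ps : Bad2 c -> ~ is_cut r -> inst r ps c -> exists p, In p ps /\ Bad2 p.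
Proof.
  intros [[R1 R2]|[Hr Hs]] Hcut Hi.
  2:{ destruct (sound_ref r ps c Hi Hr) as (p & Hp & Hrp). exists p. split; auto. right. split; auto.
      eapply sf_pres; eauto. }
  assert (L : forall f, In f (fst c) -> f = vp) by (intros f Hf; apply R1 in Hf; destruct Hf as [<-|[]]; auto).
  assert (Rr : forall f, In f (snd c) -> f = BX2) by (intros f Hf; apply R2 in Hf; destruct Hf as [<-|[]]; auto).
  destruct r; destruct ps as [|q1 [|q2 [|q3 ps]]]; simpl in Hi; try contradiction.
  - destruct Hi as (phi & H1 & H2). apply L in H1. apply Rr in H2. rewrite H1 in H2; discriminate.
  - apply L in Hi. discriminate.
  - destruct Hi as (G & D & [Hc1 Hc2] & _). assert (H := L _ (proj2 (Hc1 _) (or_introl eq_refl))). discriminate.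
  - destruct Hi as (G & D & [Hc1 Hc2] & _). assert (H := Rr _ (proj2 (Hc2 _) (or_introl eq_refl))). discriminate.
  - destruct Hi as [H1 H2]. exists q1. split; [simpl; auto|]. left. split; intros f Hf; [apply R1, H1 | apply R2, H2]; auto.
  - exfalso; apply Hcut; simpl; auto.
  - destruct Hi as (G & D & [Hc1 Hc2] & [Ha1 Ha2]).
    assert (H := Rr _ (proj2 (Hc2 _) (or_introl eq_refl))). injection H; intros -> ->.
    assert (HG : forall g, ~ In g G).
    { intros g Hg. assert (H' := L _ (proj2 (Hc1 _) (in_map (FBox a0) _ _ Hg))). discriminate. }
    assert (HD : forall d, In d D -> d = BX2) by (intros d Hd; apply Rr, Hc2; simpl; auto).
    exists q1. split; [simpl; auto|]. right. split.
    + exists bool, R2m, V2m, false. split.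
      * intros f Hf. apply Ha1 in Hf. simpl in Hf. exfalso; eapply HG; eauto.
      * intros f Hf. apply Ha2 in Hf. simpl in Hf. destruct Hf as [<-|Hf]; [apply X2_false|].
        apply in_map_iff in Hf. destruct Hf as (d & <- & Hd). rewrite (HD d Hd). apply BBX2_false.
    + intros f [Hf|Hf]; [apply Ha1 in Hf|apply Ha2 in Hf]; simpl in Hf.
      * exfalso; eapply HG; eauto.
      * destruct Hf as [<-|Hf]; [reflexivity|].
        apply in_map_iff in Hf. destruct Hf as (d & <- & Hd). rewrite (HD d Hd). reflexivity.
  - destruct Hi as (G & D & [Hc1 Hc2] & _). assert (H := Rr _ (proj2 (Hc2 _) (or_introl eq_refl))). discriminate.
  - destruct Hi as (G & D & [Hc1 Hc2] & _). assert (H := L _ (proj2 (Hc1 _) (or_introl eq_refl))). discriminate.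
  - destruct Hi as (G & D & [Hc1 Hc2] & _). assert (H := Rr _ (proj2 (Hc2 _) (or_introl eq_refl))). discriminate.
  - destruct Hi as (G & D & [Hc1 Hc2] & _). assert (H := L _ (proj2 (Hc1 _) (or_introl eq_refl))). discriminate.
  - destruct Hi as (G & D & [Hc1 Hc2] & _). assert (H := Rr _ (proj2 (Hc2 _) (or_introl eq_refl))). discriminate.
  - destruct Hi as (G & D & [Hc1 Hc2] & _). assert (H := L _ (proj2 (Hc1 _) (or_introl eq_refl))). discriminate.
  - destruct Hi as (G & D & [Hc1 Hc2] & _). assert (H := L _ (proj2 (Hc1 _) (or_introl eq_refl))). discriminate.
  - destruct Hi as (G & D & [Hc1 Hc2] & _). assert (H := Rr _ (proj2 (Hc2 _) (or_introl eq_refl))). discriminate.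
  - destruct Hi as (G & [Hc1 Hc2] & _). assert (H := Rr _ (proj2 (Hc2 _) (or_introl eq_refl))). discriminate.
  - destruct Hi as (G & D & [Hc1 Hc2] & _). assert (H := Rr _ (proj2 (Hc2 _) (or_introl eq_refl))). discriminate.
Qed.

Lemma S2_not_G_cutfree : ~ G_cutfree_provable S2.
Proof.
  intros (t & [Hnb Hlc] & Hcf & Hroot).
  refine (G_engine Bad2 G_rule (fun _ r => ~ is_cut r) _ t Hnb Hlc _ _).
  - intros c r ps Hb _ Hc Hi. eapply Hbad2; eauto.
  - intros a s r ts H. eapply Hcf; eauto.
  - apply Bad2_seq with S2. { destruct Hroot as [H1 H2]; split; intro x; split; intro; [apply H1|apply H1|apply H2|apply H2]; auto. }
    left. split; intros f Hf; auto.
Qed.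

Lemma S2_not_C_cutfree : ~ C_cutfree_provable S2.
Proof.
  intros (t & comp & Hc & Hcf & Hroot).
  refine (C_engine Bad2 Bad2_seq _ _ t comp Hc Hcf _).
  - intros c r ps Hb _ Hcut Hi. eapply Hbad2; eauto.
  - apply Bad2_nostar.
  - apply Bad2_seq with S2. { destruct Hroot as [H1 H2]; split; intro x; split; intro; [apply H1|apply H1|apply H2|apply H2]; auto. }
    left. split; intros f Hf; auto.
Qed.

Fixpoint allT (Pn : sequent -> rlabel -> list ptree -> Prop) (Pb : sequent -> Prop) (t : ptree) : Prop :=
  match t with
  | PNode s r ts => Pn s r ts /\
      (fix go (l : list ptree) : Prop := match l with [] => True | x :: l' => allT Pn Pb x /\ go l' end) ts
  | PBud s => Pb s
  end.

Lemma allT_child Pn Pb s r ts k c : allT Pn Pb (PNode s r ts) -> nth_error ts k = Some c -> allT Pn Pb c.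
Proof.
  simpl. intros [_ H]. revert k H. induction ts as [|x l IH]; intros k H Hk; destruct k; simpl in *; try discriminate.
  - injection Hk; intros <-. tauto.
  - eapply IH; [tauto|eauto].
Qed.

Lemma allT_sub Pn Pb t a x : allT Pn Pb t -> subtree_at t a = Some x -> allT Pn Pb x.
Proof.
  revert t; induction a as [|k a IH]; intros t H Hs; simpl in Hs.
  - injection Hs; intros <-; auto.
  - destruct t as [s r ts|s]; [|discriminate].
    destruct (nth_error ts k) as [c|] eqn:E; [|discriminate].
    eapply IH; [|eauto]. eapply allT_child; eauto.
Qed.

Lemma allT_node Pn Pb t a s r ts : allT Pn Pb t -> subtree_at t a = Some (PNode s r ts) -> Pn s r ts.
Proof. intros H Hs. apply (allT_sub _ _ _ _ _ H Hs). Qed.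

Lemma allT_bud Pn Pb t a s : allT Pn Pb t -> subtree_at t a = Some (PBud s) -> Pb s.
Proof. intros H Hs. apply (allT_sub _ _ _ _ _ H Hs). Qed.

Lemma allT_nobuds t : allT (fun _ _ _ => True) (fun _ => False) t -> no_buds t.
Proof. intros H a s Hs. exact (allT_bud _ _ _ _ _ H Hs). Qed.

Lemma allT_lc (allowed : rlabel -> Prop) t :
  allT (fun s r ts => allowed r /\ inst r (map root_seq ts) s) (fun _ => True) t -> locally_correct allowed t.
Proof. intros H a s r ts Hs. exact (allT_node _ _ _ _ _ _ _ H Hs). Qed.

Lemma allT_cf t : allT (fun s r ts => ~ is_cut r) (fun _ => True) t -> cut_free t.
Proof. intros H a s r ts Hs. exact (allT_node _ _ _ _ _ _ _ H Hs). Qed.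

Lemma nobuds_sub t a x : no_buds t -> subtree_at t a = Some x -> no_buds x.
Proof. intros H Hs b s Hb. apply (H (a ++ b) s). rewrite subtree_app, Hs. auto. Qed.

Lemma escape t comp v k : inf_path t comp v k ->
  forall n i x, subtree_at t (v i) = Some x -> no_buds x -> height x <= n -> False.
Proof.
  intros Hp n. induction n as [|n IH]; intros i x Hx Hnb Hh.
  - destruct (Hp i) as (s & r & ts & c & Hs & Hk & _). rewrite Hx in Hs. injection Hs; intros ->.
    pose proof (height_child s r ts _ _ Hk). lia.
  - destruct (Hp i) as (s & r & ts & c & Hs & Hk & Hb). rewrite Hx in Hs. injection Hs; intros ->.
    pose proof (height_child s r ts _ _ Hk).
    assert (Hc : subtree_at (PNode s r ts) [k i] = Some c) by (simpl; rewrite Hk; auto).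
    destruct c as [s' r' ts'|s'].
    + apply (IH (S i) (PNode s' r' ts')); auto.
      * rewrite Hb, subtree_app, Hx. auto.
      * eapply nobuds_sub; eauto.
      * lia.
    + exfalso. apply (Hnb [k i] s'). auto.
Qed.

Lemma nobuds_gc t comp : no_buds t -> global_condition t comp.
Proof.
  intros Hnb v k Hp. exfalso.
  destruct (Hp 0) as (s & r & ts & c & Hs & _).
  apply (escape t comp v k Hp (height (PNode s r ts)) 0 (PNode s r ts)); auto.
  eapply nobuds_sub; eauto.
Qed.

Lemma nobuds_comp t comp : no_buds t -> companions_ok t comp.
Proof. intros Hnb a s Hs. exfalso. exact (Hnb a s Hs). Qed.

Ltac sqeq := split; intro; simpl; tauto.

Definition BBnegp := FBBox a0 negp.
Definition t2 : ptree :=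
  PNode S2 (RCut negp)
   [ PNode ([vp], [negp; BX2]) RWk
       [ PNode ([], [BX2; negp]) (RBox a0 X2)
          [ PNode ([], [X2; BBnegp]) (RImpR BBnegp FBot)
             [ PNode ([BBnegp], [FBot; BBnegp]) RAx [] ] ] ];
     PNode ([negp; vp], [BX2]) (RImpL vp FBot)
       [ PNode ([vp], [vp; BX2]) RAx [];
         PNode ([FBot; vp], [BX2]) RBot [] ] ].

Lemma t2_lc (allowed : rlabel -> Prop) : (forall r, allowed r \/ is_cut r \/ True) ->
  allowed (RCut negp) -> allowed RWk -> allowed (RBox a0 X2) -> allowed (RImpR BBnegp FBot) ->
  allowed RAx -> allowed (RImpL vp FBot) -> allowed RBot -> locally_correct allowed t2.
Proof.
  intros _ H1 H2 H3 H4 H5 H6 H7. apply allT_lc. simpl.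
  repeat split; auto.
  - exists [vp], [BX2]. repeat split; intro; simpl; tauto.
  - intros x Hx; simpl in *; tauto.
  - intros x Hx; simpl in *; tauto.
  - exists [], [negp]. repeat split; intro; simpl; tauto.
  - exists [], [BBnegp]. repeat split; intro; simpl; tauto.
  - exists BBnegp. simpl; auto.
  - exists [vp], [BX2]. repeat split; intro; simpl; tauto.
  - exists vp. simpl; auto.
Qed.

Lemma t2_nb : no_buds t2.
Proof. apply allT_nobuds. simpl. tauto. Qed.

Lemma S2_G : G_provable S2.
Proof.
  exists t2. split; [split|].
  - apply t2_nb.
  - apply t2_lc; simpl; auto.
  - sqeq.
Qed.

Lemma S2_C : C_provable S2.
Proof.
  exists t2, (fun _ => []). split; [split; [|split]|].
  - apply t2_lc; simpl; auto.
  - apply nobuds_comp, t2_nb.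
  - apply nobuds_gc, t2_nb.
  - sqeq.
Qed.

Definition vq := FVar 1.
Definition vr := FVar 2.
Definition aa := PSeq a0 a0.
Definition Af := FBox (PStar aa) vq.
Definition Bf := FBox (PStar aa) (FBox a0 vr).
Definition nq := FImp vq FBot.
Definition Dq := FImp nq vr.
Definition Tf := FBox (PStar a0) Dq.
Definition S3 : sequent := ([Af; Bf], [Tf]).

Definition T1 : list formula :=
  [Af; FBox aa Af; FBox a0 (FBox a0 Af); FBox a0 Af; vq; Bf; FBox aa Bf; FBox a0 (FBox a0 Bf);
   FBox a0 Bf; FBox a0 vr; FBox a0 Tf; Dq].
Definition F1 : list formula := [vr; nq; FBot; Tf].

Ltac inT H := unfold T1, F1 in H; simpl in H; repeat destruct H as [H|H]; try contradiction; try discriminate.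

Lemma T1F1_disj f : In f T1 -> In f F1 -> False.
Proof. intros H1 H2. inT H2; subst; inT H1. Qed.

Lemma T1_bot : ~ In FBot T1.
Proof. intros H; inT H. Qed.
Lemma T1_imp x y : In (FImp x y) T1 -> x = nq /\ y = vr.
Proof. intros H; inT H. injection H; auto. Qed.
Lemma F1_imp x y : In (FImp x y) F1 -> x = vq /\ y = FBot.
Proof. intros H; inT H. injection H; auto. Qed.
Lemma F1_box pi phi : In (FBox pi phi) F1 -> pi = PStar a0 /\ phi = Dq.
Proof. intros H; inT H. injection H; auto. Qed.
Lemma F1_bbox pi phi : ~ In (FBBox pi phi) F1.
Proof. intros H; inT H. Qed.
Lemma T1_bbox pi phi : ~ In (FBBox pi phi) T1.
Proof. intros H; inT H. Qed.
Lemma T1_nostar g : ~ In (FBox (PStar a0) g) T1.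
Proof. intros H; inT H. Qed.
Lemma T1_seq p0 p1 phi : In (FBox (PSeq p0 p1) phi) T1 -> In (FBox p0 (FBox p1 phi)) T1.
Proof. intros H; inT H; injection H; intros; subst; unfold T1; simpl; tauto. Qed.
Lemma T1_star pi phi : In (FBox (PStar pi) phi) T1 -> In phi T1 /\ In (FBox pi (FBox (PStar pi) phi)) T1.
Proof. intros H; inT H; injection H; intros; subst; unfold T1; simpl; tauto. Qed.
Lemma T1_cup p0 p1 phi : ~ In (FBox (PCup p0 p1) phi) T1.
Proof. intros H; inT H. Qed.
Lemma T1_test p0 phi : ~ In (FBox (PTest p0) phi) T1.
Proof. intros H; inT H. Qed.

Lemma K_closed f : In f T1 \/ In f F1 -> forall g, In g (FL f) -> In g T1 \/ In g F1.
Proof.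
  intros [H|H] g Hg; [inT H|inT H]; subst; simpl in Hg; repeat destruct Hg as [Hg|Hg]; subst;
   unfold T1, F1; simpl; tauto.
Qed.

Lemma FLset_K l phi : (forall f, In f l -> In f T1 \/ In f F1) -> In phi (FLset l) -> In phi T1 \/ In phi F1.
Proof.
  intros H Hp. unfold FLset in Hp. apply in_flat_map in Hp. destruct Hp as (f & Hf & Hg).
  eapply K_closed; eauto.
Qed.

Definition R3 (n : nat) (x y : bool) : Prop := x = true /\ y = false.
Definition V3 (n : nat) (x : bool) : Prop := n = 1 /\ x = true.

Lemma Dq_false : ~ sat R3 V3 false Dq.
Proof. simpl. intro H. assert (Hn : V3 1 false -> False) by (intros [_ E]; discriminate). destruct (H Hn) as [E _]. discriminate. Qed.
Lemma Dq_true : sat R3 V3 true Dq.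
Proof. simpl. intro H. exfalso. apply H. split; auto. Qed.
Lemma BDq_false : ~ sat R3 V3 true (FBox a0 Dq).
Proof. intro H. apply Dq_false. apply (H false). split; auto. Qed.
Lemma Tf_false : ~ sat R3 V3 false Tf.
Proof. intro H. apply Dq_false. apply H. constructor. Qed.
Lemma F1_back d : In d F1 -> ~ sat R3 V3 false (FBBox (PStar a0) d).
Proof.
  intros Hd H. inT Hd; subst.
  - destruct (H false (rt1n_refl _ _ _)) as [_ E]. discriminate.
  - apply (H true). { econstructor 2. split; reflexivity. constructor. } split; auto.
  - apply (H false (rt1n_refl _ _ _)).
  - apply Tf_false. apply (H false (rt1n_refl _ _ _)).
Qed.

Definition Region3 (S : sequent) : Prop := incl (fst S) T1 /\ incl (snd S) F1.
Definition Bad3 (S : sequent) : Prop := Region3 S \/ refuted S.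

Lemma Bad3_seq S S' : seqeq S S' -> Bad3 S -> Bad3 S'.
Proof.
  intros [H1 H2] [[R1 R2]|Hr].
  - left. split; intros f Hf; [apply R1, H1 | apply R2, H2]; auto.
  - right. eapply refuted_seqeq; eauto; split; auto.
Qed.

Definition Qfl (c : sequent) (r : rlabel) : Prop := forall phi, r = RCut phi -> In phi (FLset (fst c ++ snd c)).

Lemma reg_prem q G D : seqeq q (G, D) -> incl G T1 -> incl D F1 -> Bad3 q.
Proof. intros [H1 H2] HG HD. left. split; intros f Hf; [apply HG, H1 | apply HD, H2]; auto. Qed.

Lemma Hbad3 c r ps : Bad3 c -> G_rule r -> Qfl c r -> inst r ps c -> exists p, In p ps /\ Bad3 p.
Proof.
  intros [[R1 R2]|Hr] HG HQ Hi.
  2:{ destruct (sound_ref r ps c Hi Hr) as (p & Hp & Hrp). exists p. split; auto. right; auto. }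
  destruct r; destruct ps as [|q1 [|q2 [|q3 ps]]]; simpl in Hi; try contradiction.
  - destruct Hi as (phi & H1 & H2). exfalso. exact (T1F1_disj phi (R1 _ H1) (R2 _ H2)).
  - exfalso. exact (T1_bot (R1 _ Hi)).
  - destruct Hi as (G & D & [Hc1 Hc2] & Ha & _). simpl in *.
    destruct (T1_imp _ _ (R1 _ (proj2 (Hc1 _) (or_introl eq_refl)))) as [-> ->].
    exists q1. split; [simpl; auto|]. eapply reg_prem; eauto.
    + intros f Hf. apply R1, Hc1. right; auto.
    + intros f [<-|Hf]; [unfold F1; simpl; tauto|]. apply R2, Hc2. auto.
  - destruct Hi as (G & D & [Hc1 Hc2] & Ha). simpl in *.
    destruct (F1_imp _ _ (R2 _ (proj2 (Hc2 _) (or_introl eq_refl)))) as [-> ->].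
    exists q1. split; [simpl; auto|]. eapply reg_prem; eauto.
    + intros f [<-|Hf]; [unfold T1; simpl; tauto|]. apply R1, Hc1. auto.
    + intros f [<-|Hf]; [unfold F1; simpl; tauto|]. apply R2, Hc2. right; auto.
  - destruct Hi as [H1 H2]. exists q1. split; [simpl; auto|]. left. split; intros f Hf; [apply R1, H1 | apply R2, H2]; auto.
  - destruct Hi as (G & D & [Hc1 Hc2] & Ha & Hb). simpl in *.
    assert (Hphi : In phi T1 \/ In phi F1).
    { apply FLset_K with (fst c ++ snd c); [|apply HQ; auto].
      intros f Hf. apply in_app_or in Hf. destruct Hf as [Hf|Hf]; [left; apply R1|right; apply R2]; auto. }
    destruct Hphi as [Hphi|Hphi].
    + exists q2. split; [simpl; auto|]. eapply reg_prem; eauto.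
      * intros f [<-|Hf]; auto. apply R1, Hc1. auto.
      * intros f Hf. apply R2, Hc2. auto.
    + exists q1. split; [simpl; auto|]. eapply reg_prem; eauto.
      * intros f Hf. apply R1, Hc1. auto.
      * intros f [<-|Hf]; auto. apply R2, Hc2. auto.
  - destruct Hi as (G & D & [Hc1 Hc2] & [Ha1 Ha2]). simpl in *.
    destruct (F1_box _ _ (R2 _ (proj2 (Hc2 _) (or_introl eq_refl)))) as [-> ->].
    exists q1. split; [simpl; auto|]. right. exists bool, R3, V3, false. split.
    + intros f Hf. apply Ha1 in Hf. exfalso. apply (T1_nostar f). apply R1, Hc1. apply in_map. auto.
    + intros f Hf. apply Ha2 in Hf. destruct Hf as [<-|Hf]; [apply Dq_false|].
      apply in_map_iff in Hf. destruct Hf as (d & <- & Hd). apply F1_back. apply R2, Hc2. right; auto.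
  - destruct Hi as (G & D & [Hc1 Hc2] & _). exfalso. apply (F1_bbox pi phi). apply R2, Hc2. simpl; auto.
  - destruct Hi as (G & D & [Hc1 Hc2] & Ha). simpl in *.
    assert (H := T1_seq _ _ _ (R1 _ (proj2 (Hc1 _) (or_introl eq_refl)))).  
    exists q1. split; [simpl; auto|]. eapply reg_prem; eauto.
    + intros f [<-|Hf]; auto. apply R1, Hc1. simpl; tauto.
    + intros f Hf. apply R2, Hc2. auto.
  - destruct Hi as (G & D & [Hc1 Hc2] & _). exfalso.
    assert (H := R2 _ (proj2 (Hc2 _) (or_introl eq_refl))). inT H.
  - destruct Hi as (G & D & [Hc1 Hc2] & _). exfalso.
    apply (T1_cup p0 p1 phi). apply R1, Hc1. simpl; auto.
  - destruct Hi as (G & D & [Hc1 Hc2] & _). exfalso.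
    assert (H := R2 _ (proj2 (Hc2 _) (or_introl eq_refl))). inT H.
  - destruct Hi as (G & D & [Hc1 Hc2] & Ha). simpl in *.
    destruct (T1_star _ _ (R1 _ (proj2 (Hc1 _) (or_introl eq_refl)))) as [Hs1 Hs2].
    exists q1. split; [simpl; auto|]. eapply reg_prem; eauto.
    + intros f [<-|[<-|Hf]]; auto. apply R1, Hc1. simpl; tauto.
    + intros f Hf. apply R2, Hc2. auto.
  - destruct Hi as (G & D & [Hc1 Hc2] & _). exfalso.
    apply (T1_test phi psi). apply R1, Hc1. simpl; auto.
  - destruct Hi as (G & D & [Hc1 Hc2] & _). exfalso.
    assert (H := R2 _ (proj2 (Hc2 _) (or_introl eq_refl))). inT H.
  - destruct Hi as (G & [Hc1 Hc2] & [Ha1 Ha2]). simpl in *.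
    destruct (F1_box _ _ (R2 _ (proj2 (Hc2 _) (or_introl eq_refl)))) as [E ->].
    injection E; intros ->.
    exists q1. split; [simpl; auto|]. right. exists bool, R3, V3, true. split.
    + intros f Hf. apply Ha1 in Hf. destruct Hf as [<-|Hf]; [apply Dq_true|].
      exfalso. apply (T1_nostar f). apply R1, Hc1. right. apply in_map. auto.
    + intros f Hf. apply Ha2 in Hf. destruct Hf as [<-|[]]. apply BDq_false.
Qed.

Lemma S3_not_G_FL : ~ G_FLcut_provable S3.
Proof.
  intros (t & [Hnb Hlc] & Hfl & Hroot).
  refine (G_engine Bad3 G_rule Qfl _ t Hnb Hlc _ _).
  - intros c r ps Hb HG Hq Hi. eapply Hbad3; eauto.
  - intros a s r ts H phi ->. eapply Hfl; eauto.
  - apply Bad3_seq with S3. { destruct Hroot as [H1 H2]; split; intro x; split; intro; [apply H1|apply H1|apply H2|apply H2]; auto. }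
    left. split; intros f Hf; unfold T1, F1; simpl in *; tauto.
Qed.

Lemma S3_not_G_cutfree : ~ G_cutfree_provable S3.
Proof.
  intros (t & Hg & Hcf & Hroot). apply S3_not_G_FL. exists t. split; auto. split; auto.
  intros a s phi ts H. exfalso. exact (Hcf a s (RCut phi) ts H I).
Qed.

Definition nA := FBox aa Af.
Definition aaA := FBox a0 (FBox a0 Af).
Definition aA := FBox a0 Af.
Definition nB := FBox aa Bf.
Definition aaB := FBox a0 (FBox a0 Bf).
Definition aB := FBox a0 Bf.
Definition ar := FBox a0 vr.
Definition aT := FBox a0 Tf.

Definition t3 : ptree :=
  PNode ([Af; Bf], [Tf]) (RCs a0 Dq)
   [ PNode ([Af; Bf], [Dq]) (RStarL aa vq)
      [ PNode ([vq; nA; Bf], [Dq]) RWk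
         [ PNode ([vq], [Dq]) (RImpR nq vr)
            [ PNode ([nq; vq], [vr]) (RImpL vq FBot)
               [ PNode ([vq], [vq; vr]) RAx [];
                 PNode ([FBot; vq], [vr]) RBot [] ] ] ] ];
     PNode ([Af; Bf], [aT]) (RStarL aa vq)
      [ PNode ([vq; nA; Bf], [aT]) (RStarL aa (FBox a0 vr))
         [ PNode ([ar; nB; vq; nA], [aT]) (RSeqL a0 a0 Af)
            [ PNode ([aaA; ar; nB; vq], [aT]) (RSeqL a0 a0 Bf)
               [ PNode ([aaB; aaA; ar; vq], [aT]) RWk
                  [ PNode ([aaA; ar; aaB], [aT]) (RBox a0 Tf)
                     [ PNode ([aA; vr; aB], [Tf]) (RCs a0 Dq)
                        [ PNode ([aA; vr; aB], [Dq]) RWk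
                           [ PNode ([vr], [Dq]) (RImpR nq vr)
                              [ PNode ([nq; vr], [vr]) RAx [] ] ];
                          PNode ([aA; vr; aB], [aT]) RWk
                           [ PNode ([aA; aB], [aT]) (RBox a0 Tf)
                              [ PBud ([Af; Bf], [Tf]) ] ] ] ] ] ] ] ] ] ].

Ltac unf := unfold nA, aaA, aA, nB, aaB, aB, ar, aT, Tf, Dq, Af, Bf, nq, vq, vr, aa, a0 in *.

Lemma t3_lc : locally_correct C_rule t3.
Proof.
  apply allT_lc. simpl.
  repeat split; simpl; auto;
  try (intros x Hx; simpl in *; tauto).
  - exists [Af; Bf], []. repeat split; intro; unf; simpl in *; tauto.
  - exists [Bf], [Dq]. repeat split; intro; unf; simpl in *; tauto.
  - exists [vq], []. repeat split; intro; unf; simpl in *; tauto.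
  - exists [vq], [vr]. repeat split; intro; unf; simpl in *; tauto.
  - exists vq; simpl; auto.
  - exists [Bf], [aT]. repeat split; intro; unf; simpl in *; tauto.
  - exists [vq; nA], [aT]. repeat split; intro; unf; simpl in *; tauto.
  - exists [ar; nB; vq], [aT]. repeat split; intro; unf; simpl in *; tauto.
  - exists [aaA; ar; vq], [aT]. repeat split; intro; unf; simpl in *; tauto.
  - exists [aA; vr; aB], []. repeat split; intro; unf; simpl in *; tauto.
  - exists [aA; vr; aB], []. repeat split; intro; unf; simpl in *; tauto.
  - exists [vr], []. repeat split; intro; unf; simpl in *; tauto.
  - exists vr; simpl; auto.
  - exists [Af; Bf], []. repeat split; intro; unf; simpl in *; tauto.
Qed.

Definition addr (m : nat) : list nat :=
  match m with
  | 0 => [] | 1 => [1] | 2 => [1;0] | 3 => [1;0;0] | 4 => [1;0;0;0] | 5 => [1;0;0;0;0]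
  | 6 => [1;0;0;0;0;0] | 7 => [1;0;0;0;0;0;0] | 8 => [1;0;0;0;0;0;0;1]
  | _ => [1;0;0;0;0;0;0;1;0]
  end.
Definition nextm (m : nat) : nat := if m =? 9 then 0 else S m.
Definition kk (m : nat) : nat := match m with 0 | 7 => 1 | _ => 0 end.
Definition tauo (a : list nat) : formula := match length a with 0 | 7 => Tf | _ => aT end.

Lemma t3_comp : companions_ok t3 (fun _ => []).
Proof.
  intros a s Hs.
  assert (H : allT (fun _ _ _ => True) (fun s => seqeq s ([Af; Bf], [Tf])) t3) by (simpl; repeat split; intro; simpl; tauto).
  pose proof (allT_bud _ _ _ _ _ H Hs). exists ([Af; Bf], [Tf]), (RCs a0 Dq). eexists. split; [reflexivity|auto].
Qed.

Lemma t3_cf : cut_free t3.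
Proof. apply allT_cf. simpl. repeat split; intro; auto. Qed.

Ltac spine_ex := first [ exists 0; split; [lia|reflexivity] | exists 1; split; [lia|reflexivity]
  | exists 2; split; [lia|reflexivity] | exists 3; split; [lia|reflexivity] | exists 4; split; [lia|reflexivity]
  | exists 5; split; [lia|reflexivity] | exists 6; split; [lia|reflexivity] | exists 7; split; [lia|reflexivity]
  | exists 8; split; [lia|reflexivity] | exists 9; split; [lia|reflexivity] ].

Lemma child_goodX : True. exact I. Qed.
Lemma child_good m k x : m < 10 -> subtree_at t3 (addr m ++ [k]) = Some x ->
  (exists m', m' < 10 /\ addr m ++ [k] = addr m') \/ no_buds x \/ (exists s, x = PBud s).
Proof.
  intros Hm H.
  do 10 (destruct m as [|m]; [ destruct k as [|[|k]]; unfold t3 in H; simpl in H; try (destruct k; simpl in H; discriminate); try discriminate; injection H; intros <-;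
     first [ left; spine_ex | right; left; apply allT_nobuds; simpl; tauto | right; right; eexists; reflexivity ] | ]).
  lia.
Qed.

Lemma all_good a : forall x, subtree_at t3 a = Some x ->
  (exists m, m < 10 /\ a = addr m) \/ no_buds x \/ (exists s, x = PBud s).
Proof.
  induction a as [|k a IH] using rev_ind; intros x H.
  - left. exists 0. split; [lia|auto].
  - rewrite subtree_app in H. destruct (subtree_at t3 a) as [y|] eqn:E; [|discriminate].
    destruct (IH y eq_refl) as [(m & Hm & ->)|[Hnb|(s & ->)]].
    + apply (child_good m k x Hm). rewrite subtree_app, E. auto.
    + right; left. eapply nobuds_sub; eauto.
    + simpl in H. discriminate.
Qed.

Lemma edge_spine m kx m' : m < 10 -> m' < 10 -> edge t3 (fun _ => []) (addr m) kx (addr m') ->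
  m' = nextm m /\ kx = kk m.
Proof.
  intros Hm Hm' (s & r & ts & c & Hs & Hk & Hb).
  do 10 (destruct m as [|m]; [unfold t3 in Hs; simpl in Hs; injection Hs; intros; subst; destruct kx as [|[|kx]]; simpl in Hk; try (destruct kx; simpl in Hk; discriminate); try discriminate;
     injection Hk; intros <-; simpl in Hb;
     do 10 (destruct m' as [|m']; [simpl in Hb; try discriminate; split; reflexivity | ]); lia | ]).
  lia.
Qed.

Lemma spine_trace m : m < 10 -> exists s r ts s' r' ts',
  subtree_at t3 (addr m) = Some (PNode s r ts) /\ subtree_at t3 (addr (nextm m)) = Some (PNode s' r' ts') /\
  In (tauo (addr m)) (snd s) /\ In (tauo (addr (nextm m))) (snd s') /\
  trace_step r (kk m) (tauo (addr m)) (tauo (addr (nextm m))).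
Proof.
  intros Hm.
  do 10 (destruct m as [|m]; [ do 6 eexists; split; [reflexivity|]; split; [reflexivity|]; simpl;
     split; [tauto|]; split; [tauto|];
     first [ left; reflexivity | right; split; reflexivity | split; reflexivity ] | ]).
  lia.
Qed.

Lemma t3_gc : global_condition t3 (fun _ => []).
Proof.
  intros v k Hp.
  assert (Hsp : forall i, exists m, m < 10 /\ v i = addr m).
  { intro i. destruct (Hp i) as (s & r & ts & c & Hs & _).
    destruct (all_good _ _ Hs) as [H|[Hnb|(s0 & E)]]; auto; [|discriminate].
    exfalso. exact (escape t3 _ v k Hp _ i _ Hs Hnb (le_n _)). }
  assert (Htr : forall i m, m < 10 -> v i = addr m -> v (S i) = addr (nextm m) /\ k i = kk m).
  { intros i m Hm Hv. destruct (Hsp (S i)) as (m' & Hm' & Hv'). pose proof (Hp i) as He.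
    rewrite Hv, Hv' in He. destruct (edge_spine _ _ _ Hm Hm' He) as [-> ->]. auto. }
  assert (Hreach : forall d i m, m < 10 -> 10 - m = d -> v i = addr m -> exists j, i <= j /\ v j = addr 0).
  { induction d as [|d IH]; intros i m Hm Hd Hv; [lia|].
    destruct m as [|m]; [exists i; auto|].
    destruct (Htr i (S m) Hm Hv) as [Hv' _].
    destruct (Nat.eq_dec m 8) as [->|Hne].
    - exists (S i). split; auto.
    - assert (nextm (S m) = S (S m)) by (unfold nextm; destruct (Nat.eqb_spec (S m) 9); [lia|auto]).
      rewrite H in Hv'. destruct (IH (S i) (S (S m))) as (j & Hj & Hvj); auto; try lia.
      exists j. split; auto; lia. }
  exists 0, (fun i => tauo (v i)). split.
  - intros i _. destruct (Hsp i) as (m & Hm & Hv). destruct (Htr i m Hm Hv) as [Hv' Hk].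
    rewrite Hv, Hv', Hk. apply spine_trace; auto.
  - intros n. destruct (Hsp n) as (m & Hm & Hv).
    destruct (Hreach (10 - m) n m Hm eq_refl Hv) as (j & Hj & Hvj).
    destruct (Htr j 0 ltac:(lia) Hvj) as [Hv' Hk].
    exists j. split; auto. rewrite Hvj. simpl. do 3 eexists. split; [reflexivity|].
    rewrite Hk, Hv'. simpl. split; reflexivity.
Qed.

Lemma S3_C : C_cutfree_provable S3.
Proof.
  exists t3, (fun _ => []). split; [split; [apply t3_lc|split; [apply t3_comp|apply t3_gc]]|].
  split; [apply t3_cf|]. simpl. split; intro; simpl; tauto.
Qed.

Theorem mainTheorem8 :
  ((exists S : sequent, ~ G_cutfree_provable S /\ C_cutfree_provable S) /\
   (exists S : sequent, ~ G_FLcut_provable S /\ C_cutfree_provable S)) /\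
  (exists S : sequent,
     G_provable S /\ C_provable S /\ ~ G_cutfree_provable S /\ ~ C_cutfree_provable S).
Proof.
  split; [split|].
  - exists S3. split; [apply S3_not_G_cutfree | apply S3_C].
  - exists S3. split; [apply S3_not_G_FL | apply S3_C].
  - exists S2. split; [apply S2_G|split; [apply S2_C|split; [apply S2_not_G_cutfree|apply S2_not_C_cutfree]]].
Qed.
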